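(* Let $A$ be a $3\times 3$ matrix with real entries whose characteristic polynomial is $P(x)=x^3-bx^2+cx-d$, where $b>1$, $c>0$, $d\in(0,1)$, $1-d<b-c$ and $bc-d>0$. Then: (i) All the real roots of $P$ are located in the interval $(0,b)$. (ii) $P$ has at least one real root in the interval $(1,b)$. (iii) If $P$ has two (non-real) complex roots, then both are located in the unit disk. (iv) If all the roots of $P$ are real, then $P$ has at least one real root in the interval $(0,1)$. (v) $P$ has a single root in the interval $(1,b)$.
   Context: The unit disk means the open set $\{z\in\mathbb{C}:\ |z|<1\}$. *)

(* Defs.v *)
From HB Require Import structures.
From mathcomp Require Import all_boot all_order all_algebra.
From mathcomp Require Import reals.
From mathcomp.real_closed Require Import complex.
Set Implicit Arguments. Unset Strict Implicit. Unset Printing Implicit Defensive.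

(* Main.v *)
Require Import Defs.
From HB Require Import structures.
From mathcomp Require Import all_boot all_order all_algebra.
From mathcomp Require Import reals.
From mathcomp.real_closed Require Import complex.
From mathcomp Require Import ring lra.
Import Order.TTheory GRing.Theory Num.Theory.
Local Open Scope ring_scope.

Lemma PCeval (R : realType) (b c d x y : R) :
 let z := (x +i* y)%C in
 (z^+3 - (b%:C)%C * z^+2 + (c%:C)%C * z - (d%:C)%C) =
 ((x^+3 - 3 * x * y^+2 - b*(x^+2-y^+2) + c*x - d) +i* (y*(3*x^+2 - y^+2 - 2*b*x + c)))%C.
Proof.
move=> z; rewrite /z !exprS expr0 !mulr1 -!complexr0.
simpc. congr (_ +i* _)%C.
- have E : forall u v w : R, u * (u * u - v * v) - v * (u * v + v * u) - b * (u * u - v * v) + c * u - w =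
 u * (u * u) - 3 * u * (v * v) - b * (u * u - v * v) + c * u - w by move=> *; ring.
  exact: E.
- have E : forall u v : R, u * (u * v + v * u) + v * (u * u - v * v) - b * (u * v + v * u) + c * v =
   v * (3 * (u * u) - v * v - 2 * b * u + c) by move=> *; ring.
  exact: E.
Qed.

Lemma PCmap (R : realType) (b c d : R) (z : R[i]) :
  (map_poly (real_complex R) ('X^3 - b *: 'X^2 + c *: 'X - d%:P)).[z] =
  (z^+3 - (b%:C)%C * z^+2 + (c%:C)%C * z - (d%:C)%C).
Proof.
rewrite !(rmorphB, rmorphD) /= map_polyXn !map_polyZ map_polyXn map_polyX map_polyC.
by rewrite !hornerE /=.
Qed.

Lemma PCroot (R : realType) (b c d x y : R) :
  root (map_poly (real_complex R) ('X^3 - b *: 'X^2 + c *: 'X - d%:P)) (x +i* y)%C <->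
  (x^+3 - 3 * x * y^+2 - b*(x^+2-y^+2) + c*x - d = 0 /\ y*(3*x^+2 - y^+2 - 2*b*x + c) = 0).
Proof.
rewrite /root PCmap PCeval eq_complex /=.
split; first by case/andP => /eqP -> /eqP ->.
by case=> -> ->; rewrite eqxx.
Qed.
Lemma part_i (R : realType) (b c d x : R) : 1 < b -> 0 < c -> 0 < d -> 0 < b*c - d ->
  x^+3 - b*x^+2 + c*x - d = 0 -> 0 < x < b.
Proof.
move=> hb hc hd hbc hx; apply/andP; split; rewrite ltNge; apply/negP => h.
- have h2 : 0 <= x^+2 := sqr_ge0 x.
  have h3 : x * x^+2 <= 0 by nra.
  have h4 : c * x <= 0 by nra.
  have h5 : 0 <= b * x^+2 by nra.
  have : x^+3 = x * x^+2 by rewrite exprS.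
  lra.
- have h2 : 0 <= x^+2 := sqr_ge0 x.
  have h3 : 0 <= x^+2 * (x - b) by nra.
  have h4 : c * b <= c * x by nra.
  have : x^+3 = x * x^+2 by rewrite exprS.
  nra.
Qed.

Lemma part_v (R : realType) (b c d r y : R) : 1 < b -> 0 < c -> 0 < d -> d < 1 -> 1 - d < b - c ->
  1 < r -> 1 < y -> r != y ->
  r^+3 - b*r^+2 + c*r - d = 0 -> y^+3 - b*y^+2 + c*y - d = 0 -> False.
Proof.
move=> hb hc hd hd1 h1 hr hy hry pr py.
have S : r^+2 + r*y + y^+2 - b*(r+y) + c = 0.
  have E : (r - y) * (r^+2 + r*y + y^+2 - b*(r+y) + c) =
     (r^+3 - b*r^+2 + c*r - d) - (y^+3 - b*y^+2 + c*y - d) by ring.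
  rewrite pr py subrr in E.
  move/eqP: E; rewrite mulf_eq0 subr_eq0 (negbTE hry) /= => /eqP //.
have Ec : c = b*(r+y) - r^+2 - r*y - y^+2 by lra.
have Ed : d = r * y * (b - r - y).
  have E : r^+3 - b*r^+2 + c*r - d - r * (r^+2 + r*y + y^+2 - b*(r+y) + c) = r * y * (b - r - y) - d by ring.
  rewrite pr S mulr0 subr0 in E; lra.
have E1 : 1 - b + c - d = (1 - r) * (1 - y) * (1 - (b - r - y)) by rewrite Ec Ed; ring.
have hp : 0 < (1 - r) * (1 - y) by nra.
have ht : 1 < b - r - y by nra.
have hry1 : 1 < r * y by nra.
nra.
Qed.
Lemma part_iii (R : realType) (b c d x y : R) : 0 < d -> d < 1 -> 1 - d < b - c -> y != 0 ->
  x^+3 - 3 * x * y^+2 - b*(x^+2-y^+2) + c*x - d = 0 ->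
  y*(3*x^+2 - y^+2 - 2*b*x + c) = 0 -> x^+2 + y^+2 < 1.
Proof.
move=> hd hd1 h1 hy E1 E2.
have F : 3*x^+2 - y^+2 - 2*b*x + c = 0.
  by move/eqP: E2; rewrite mulf_eq0 (negbTE hy) /= => /eqP.
have Hd : d = (b - 2*x) * (x^+2 + y^+2).
  have E : (b - 2*x) * (x^+2 + y^+2) - d =
    (x^+3 - 3 * x * y^+2 - b*(x^+2-y^+2) + c*x - d) - x * (3*x^+2 - y^+2 - 2*b*x + c) by ring.
  rewrite E1 F mulr0 subr0 in E; lra.
have Hc : c = 2*b*x - 3*x^+2 + y^+2 by lra.
have P1 : 1 - b + c - d = (1 - (b - 2*x)) * ((1-x)^+2 + y^+2) by rewrite Hc Hd; ring.
have hy2 : 0 < y^+2 by rewrite exprn_even_gt0.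
have hq : 0 < (1-x)^+2 + y^+2 by have := sqr_ge0 (1-x); lra.
have ht : 1 < b - 2*x by nra.
nra.
Qed.

Lemma comp_zero (R : realType) (b c d r u e v : R) : b = 2*u + r -> c = e - r^+2 + b*r -> d = e*r ->
  v^+2 = e - u^+2 ->
  u^+3 - 3 * u * v^+2 - b*(u^+2-v^+2) + c*u - d = 0 /\
  v*(3*u^+2 - v^+2 - 2*b*u + c) = 0.
Proof. move=> Eb Ec Ed hv; rewrite Ec Ed Eb hv; split; ring. Qed.

Lemma real_root (R : realType) (b c d r u e s : R) : b = 2*u + r -> c = e - r^+2 + b*r -> d = e*r ->
  s^+2 - 2*u*s + e = 0 -> s^+3 - b*s^+2 + c*s - d = 0.
Proof.
move=> Eb Ec Ed hs.
have E : s^+3 - b*s^+2 + c*s - d = (s - r) * (s^+2 - 2*u*s + e) by rewrite Ec Ed Eb; ring.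
by rewrite E hs mulr0.
Qed.

Lemma rootE (R : realType) (b c d x : R) :
  root ('X^3 - b *: 'X^2 + c *: 'X - d%:P) x = (x^+3 - b*x^+2 + c*x - d == 0).
Proof. by rewrite /root !hornerE. Qed.

Theorem proposition4p1 (R : realType) (A : 'M[R]_3) (b c d : R) :
  char_poly A = 'X^3 - b *: 'X^2 + c *: 'X - d%:P ->
  1 < b -> 0 < c -> 0 < d -> d < 1 -> 1 - d < b - c -> 0 < b * c - d ->
  let P := char_poly A in
  let PC := map_poly (real_complex R) P in
  (* (i) *) (forall x : R, root P x -> 0 < x < b) /\
  (* (ii) *) (exists2 x : R, 1 < x < b & root P x) /\
  (* (iii) *) (forall z : R[i], root PC z -> complex.Im z != 0 -> `|z| < 1) /\
  (* (iv) *) ((forall z : R[i], root PC z -> complex.Im z = 0) ->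
              exists2 x : R, 0 < x < 1 & root P x) /\
  (* (v) *) (exists x : R, [/\ 1 < x < b, root P x &
              forall y : R, 1 < y < b -> root P y -> y = x]).
Proof.
move=> HP hb hc hd hd1 h1 hbc P PC; rewrite /PC /P HP.
have pi : forall x : R, root ('X^3 - b *: 'X^2 + c *: 'X - d%:P) x -> 0 < x < b.
  by move=> x; rewrite rootE => /eqP; apply: part_i.
have hE : forall x : R, ('X^3 - b *: 'X^2 + c *: 'X - d%:P).[x] = x^+3 - b*x^+2 + c*x - d.
  by move=> x; rewrite !hornerE.
have pii : exists2 x : R, 1 < x < b & root ('X^3 - b *: 'X^2 + c *: 'X - d%:P) x.
  have h1' : ('X^3 - b *: 'X^2 + c *: 'X - d%:P).[1] < 0.
    rewrite hE expr1n mulr1 expr1n mulr1; lra.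
  have hb' : 0 < ('X^3 - b *: 'X^2 + c *: 'X - d%:P).[b].
    rewrite hE.
    have -> : b^+3 - b * b^+2 + c * b - d = b * c - d by ring.
    done.
  have [x /andP[x1 xb] rx] := @Num.poly_ivt R ('X^3 - b *: 'X^2 + c *: 'X - d%:P) 1 b
     (ltW hb) ltac:(by rewrite (ltW h1') (ltW hb')).
  exists x => //; rewrite !lt_neqAle x1 xb !andbT; apply/andP; split.
  - by apply/eqP => ex; move: rx; rewrite /root -ex (lt_eqF h1').
  - by apply/eqP => ex; move: rx; rewrite /root ex (gt_eqF hb').
split; first exact: pi.
split; first exact: pii.
split.
  case=> x y; rewrite PCroot /= => -[E1 E2] hy.
  have hm := @part_iii _ b c d x y hd hd1 h1 hy E1 E2.
  rewrite normc_def /= (_ : 1 = (1%:C)%C) // ltcR -sqrtr1 ltr_sqrt //.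
split.
  move=> H; case: pii => r /andP[r1 rb] /eqP; rewrite hE => pr.
  have r0 : r != 0 by rewrite gt_eqF // (lt_trans ltr01 r1).
  have [e Ed] : exists e, d = e * r by exists (d / r); rewrite divfK.
  have [u Eb] : exists u, b = 2*u + r by exists ((b - r)/2); lra.
  have Ec : c = e - r^+2 + b*r.
    apply/eqP; rewrite -subr_eq0; apply/eqP.
    have E : (c - (e - r^+2 + b*r)) * r = r^+3 - b*r^+2 + c*r - d by rewrite Ed; ring.
    by move: E; rewrite pr => /eqP; rewrite mulf_eq0 (negbTE r0) orbF => /eqP.
  have he1 : e < 1 by nra.
  case: (lerP 0 (u^+2 - e)) => hD.
  - pose s := u - Num.sqrt (u^+2 - e).
    have sq := sqr_sqrtr hD.
    have hs2 : s^+2 - 2*u*s + e = 0.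
      have E : s^+2 - 2*u*s + e = (Num.sqrt (u^+2-e))^+2 - (u^+2 - e) by rewrite /s; ring.
      by rewrite E sq subrr.
    have ps := @real_root _ b c d r u e s Eb Ec Ed hs2.
    have rs : root ('X^3 - b *: 'X^2 + c *: 'X - d%:P) s by rewrite rootE ps eqxx.
    have /andP[s0 _] := pi s rs.
    exists s => //; apply/andP; split => //.
    have E : s * (u + Num.sqrt (u^+2 - e)) = e.
      have E' : s * (u + Num.sqrt (u^+2 - e)) = u^+2 - (Num.sqrt (u^+2-e))^+2 by rewrite /s; ring.
      by rewrite E' sq; ring.
    have hq := sqrtr_ge0 (u^+2 - e).
    have hss : s <= u + Num.sqrt (u^+2 - e) by rewrite /s; lra.
    nra.
  - pose v := Num.sqrt (- (u^+2 - e)).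
    have hv : v^+2 = e - u^+2 by rewrite /v sqr_sqrtr; [ring | lra].
    have [C1 C2] := @comp_zero _ b c d r u e v Eb Ec Ed hv.
    have := H (u +i* v)%C; rewrite PCroot /= => /(_ (conj C1 C2)) v0.
    have : 0 < v by rewrite /v sqrtr_gt0; lra.
    by rewrite v0 ltxx.
case: pii => r /andP[r1 rb] rr; exists r; split => //.
  by rewrite r1 rb.
move=> y /andP[y1 yb] ry.
apply/eqP; apply/negPn/negP => hne.
move: rr ry; rewrite !rootE => /eqP pr /eqP py.
by apply: (@part_v _ b c d r y hb hc hd hd1 h1 r1 y1 _ pr py); rewrite eq_sym.
Qed.
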